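(* Let $\hat Q^\pi\in\mathcal H$ satisfy $\hat C_{\omega_0,\omega_0}\hat Q^\pi-\big[\hat C_{\omega_0,\omega_0}r+\gamma\hat C_{\omega_0,\omega_1}\hat Q^\pi\big]+\lambda\hat Q^\pi=0$ (equivalently, $\hat Q^\pi$ is the kernel TD estimator). Then $\hat Q^\pi\in\hat{\mathcal H}:=\mathrm{span}\{K(\omega_0^{(i)},\cdot):i=1,\dots,n\}$.
   Context: $\mathcal S\subset\mathbb R^{d_s}$, $\mathcal A\subset\mathbb R^{d_a}$ compact convex; $K$ a symmetric positive definite kernel on $\mathcal S\times\mathcal A$ with bounded diagonal and RKHS $\mathcal H$; $r\in\mathcal H$; $\gamma\in[0,1]$, $\lambda>0$. Sample points $\omega_0^{(i)},\omega_1^{(i)}\in\mathcal S\times\mathcal A$, $i=1,\dots,n$. Empirical operators: $\hat C_{\omega_0,\omega_0}g=\frac1n\sum_{i=1}^ng(\omega_0^{(i)})K(\omega_0^{(i)},\cdot)$ and $\hat C_{\omega_0,\omega_1}g=\frac1n\sum_{i=1}^ng(\omega_1^{(i)})K(\omega_0^{(i)},\cdot)$ for $g\in\mathcal H$. *)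

(* Defs.v *)
From HB Require Import structures.
From mathcomp Require Import all_boot all_order all_algebra.
From mathcomp Require Import all_classical all_reals all_analysis.
Set Implicit Arguments. Unset Strict Implicit. Unset Printing Implicit Defensive.
Import Order.TTheory GRing.Theory Num.Theory numFieldNormedType.Exports.
Local Open Scope ring_scope.
Local Open Scope classical_set_scope.

Definition SA (R : realType) (ds da : nat)
  (S : set 'rV[R]_ds) (A : set 'rV[R]_da) : Type :=
  {p : 'rV[R]_ds * 'rV[R]_da | S p.1 /\ A p.2}.

Definition sym_pd_kernel (R : realType) (X : Type) (K : X -> X -> R) : Prop :=
  (forall x y, K x y = K y x) /\
  (forall (m : nat) (x : 'I_m -> X) (c : 'I_m -> R),
      0 <= \sum_(i < m) \sum_(j < m) c i * c j * K (x i) (x j)).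

Definition bounded_diag (R : realType) (X : Type) (K : X -> X -> R) : Prop :=
  exists M : R, forall x, K x x <= M.

Definition is_RKHS (R : realType) (X : Type) (K : X -> X -> R)
  (H : set (X -> R)) (ip : (X -> R) -> (X -> R) -> R) : Prop :=
  [/\ H (fun _ => 0),
      (forall f g, H f -> H g -> H (fun x => f x + g x)) &
      (forall (a : R) f, H f -> H (fun x => a * f x))] /\
      [/\ (forall f g, H f -> H g -> ip f g = ip g f),
          (forall f g h, H f -> H g -> H h ->
             ip (fun x => f x + g x) h = ip f h + ip g h),
          (forall (a : R) f g, H f -> H g -> ip (fun x => a * f x) g = a * ip f g),
          (forall f, H f -> 0 <= ip f f) &
          (forall f, H f -> ip f f = 0 -> f = (fun _ => 0))] /\
      (forall u : nat -> (X -> R), (forall k, H (u k)) ->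
         (forall e : R, 0 < e -> exists N, forall m p, (N <= m)%N -> (N <= p)%N ->
             Num.sqrt (ip (fun x => u m x - u p x) (fun x => u m x - u p x)) < e) ->
         exists g, H g /\ forall e : R, 0 < e -> exists N, forall m, (N <= m)%N ->
             Num.sqrt (ip (fun x => u m x - g x) (fun x => u m x - g x)) < e) /\
      (forall x, H (K x)) /\
      (forall f x, H f -> ip f (K x) = f x).

Definition Chat00 (R : realType) (X : Type) (K : X -> X -> R) (n : nat)
  (w0 : 'I_n -> X) (g : X -> R) : X -> R :=
  fun x => n%:R^-1 * \sum_(i < n) g (w0 i) * K (w0 i) x.

Definition Chat01 (R : realType) (X : Type) (K : X -> X -> R) (n : nat)
  (w0 w1 : 'I_n -> X) (g : X -> R) : X -> R :=
  fun x => n%:R^-1 * \sum_(i < n) g (w1 i) * K (w0 i) x.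

Definition feature_span (R : realType) (X : Type) (K : X -> X -> R) (n : nat)
  (w0 : 'I_n -> X) : set (X -> R) :=
  [set f | exists c : 'I_n -> R, f = fun x => \sum_(i < n) c i * K (w0 i) x].

(* Main.v *)
Require Import Defs.
From HB Require Import structures.
From mathcomp Require Import all_boot all_order all_algebra.
From mathcomp Require Import all_classical all_reals all_analysis.
From mathcomp Require Import ring lra.
Import Order.TTheory GRing.Theory Num.Theory numFieldNormedType.Exports.
Local Open Scope ring_scope.
Local Open Scope classical_set_scope.

Theorem lemma4 (R : realType) (ds da : nat)
  (S : set 'rV[R]_ds) (A : set 'rV[R]_da)
  (hSc : compact S) (hSv : convex_set (S : set (convex_lmodType 'rV[R]_ds)))
  (hAc : compact A) (hAv : convex_set (A : set (convex_lmodType 'rV[R]_da)))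
  (K : SA S A -> SA S A -> R) (hK : sym_pd_kernel K) (hKb : bounded_diag K)
  (H : set (SA S A -> R)) (ip : (SA S A -> R) -> (SA S A -> R) -> R)
  (hH : is_RKHS K H ip)
  (r : SA S A -> R) (hr : H r)
  (gamma lambda : R) (hg0 : 0 <= gamma) (hg1 : gamma <= 1) (hl : 0 < lambda)
  (n : nat) (hn : (0 < n)%N) (w0 w1 : 'I_n -> SA S A)
  (Q : SA S A -> R) (hQ : H Q)
  (hTD : forall x,
     Chat00 K w0 Q x - (Chat00 K w0 r x + gamma * Chat01 K w0 w1 Q x)
       + lambda * Q x = 0) :
  feature_span K w0 Q.
Proof.
exists (fun i => (lambda^-1 * n%:R^-1) * (r (w0 i) + gamma * Q (w1 i) - Q (w0 i))).
apply: funext => x.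
have := hTD x; rewrite /Chat00 /Chat01.
set a := \sum_(i < n) Q (w0 i) * K (w0 i) x.
set b := \sum_(i < n) r (w0 i) * K (w0 i) x.
set d := \sum_(i < n) Q (w1 i) * K (w0 i) x.
have -> : \sum_(i < n) (lambda^-1 * n%:R^-1 * (r (w0 i) + gamma * Q (w1 i) - Q (w0 i))) * K (w0 i) x
  = lambda^-1 * n%:R^-1 * (b + gamma * d - a).
  set k := lambda^-1 * n%:R^-1.
  rewrite (eq_bigr (fun i => (k * (r (w0 i) * K (w0 i) x) + (k * gamma) * (Q (w1 i) * K (w0 i) x))
      + - (k * (Q (w0 i) * K (w0 i) x)))); last by move=> i _; ring.
  rewrite big_split big_split /= sumrN -!mulr_sumr -/a -/b -/d; ring.
move=> h.
have hl0 : lambda != 0 by rewrite gt_eqF.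
apply: (mulfI hl0).
rewrite mulrA mulrA divff // mul1r.
have -> : lambda * Q x = n%:R^-1 * b + gamma * (n%:R^-1 * d) - n%:R^-1 * a.
  by apply/eqP; rewrite -subr_eq0 -h; apply/eqP; ring.
ring.
Qed.
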